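(* Let $m\ge1$ be an integer, let $\tilde H\in\Omega_{2n}$ be invertible and Hermitian, and let $\tilde B\in\Omega_{2n}$ be $\tilde H$-selfadjoint with $\sigma(\tilde B)\subset(0,\infty)$. Then there exists an $\tilde H$-selfadjoint $\tilde A\in\Omega_{2n}$ such that $\tilde A^m=\tilde B$.
   Context: $\Omega_{2n}=\{\begin{bmatrix}A_1&\bar A_2\\-A_2&\bar A_1\end{bmatrix}: A_1,A_2\in\mathbb{C}^{n\times n}\}\subset\mathbb{C}^{2n\times 2n}$. For an invertible Hermitian $H$, $A$ is $H$-selfadjoint if $HA=A^*H$. $\sigma(\cdot)$ denotes the spectrum. *)

(* Defs.v *)
From HB Require Import structures.
From mathcomp Require Import all_boot all_order all_algebra.
From mathcomp Require Import complex.
From mathcomp Require Import reals.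
Set Implicit Arguments. Unset Strict Implicit. Unset Printing Implicit Defensive.
Import Order.TTheory GRing.Theory Num.Theory.
Local Open Scope ring_scope.

Definition mxconj {C : numClosedFieldType} {m n} (A : 'M[C]_(m, n)) : 'M[C]_(m, n) :=
  map_mx Num.conj A.
Definition adjmx {C : numClosedFieldType} {m n} (A : 'M[C]_(m, n)) : 'M[C]_(n, m) :=
  (mxconj A)^T.

Definition inOmega {C : numClosedFieldType} (n : nat) (M : 'M[C]_(n + n)) : Prop :=
  exists A1 A2 : 'M[C]_n, M = block_mx A1 (mxconj A2) (- A2) (mxconj A1).

Definition is_hermitian {C : numClosedFieldType} {n} (H : 'M[C]_n) : Prop := adjmx H = H.

Definition H_selfadjoint {C : numClosedFieldType} {n} (H A : 'M[C]_n) : Prop :=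
  H *m A = adjmx A *m H.

Definition spec_pos {C : numClosedFieldType} {n} (B : 'M[C]_n) : Prop :=
  forall a : C, eigenvalue B a -> a \is Num.real /\ 0 < a.

(* Main.v *)
Require Import Defs.
From HB Require Import structures.
From mathcomp Require Import all_boot all_order all_algebra.
From mathcomp Require Import complex reals.
Import Order.TTheory GRing.Theory Num.Theory.
Local Open Scope ring_scope.

Lemma rcf_root {R : rcfType} {m : nat} {r : R} : (0 < m)%N -> 0 < r ->
  exists s : R, s ^+ m = r.
Proof.
move=> m0 r0.
pose y : R[i] := m.-root (r%:C)%C.
have y0 : 0 < y by rewrite rootC_gt0 // ltcR.
have yr : y \is Num.real by apply: gtr0_real.
exists (complex.Re y); apply: (@complexI R).
rewrite rmorphXn /= RRe_real // rootCK //.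
Qed.

Lemma core (R : rcfType) (m : nat) (rs : seq R) : (0 < m)%N ->
  all (fun r => 0 < r) rs ->
  exists p : {poly R}, \prod_(r <- rs) ('X - r%:P) %| p ^+ m - 'X.
Proof.
move=> m0; elim: rs => [|r rs IH] /=.
  by move=> _; exists 0; rewrite big_nil dvd1p.
case/andP=> r0 /IH [p]; set Q := \prod_(_ <- _) _ => /dvdpP [g Hg].
have key : forall c : R, (p + c%:P * Q) ^+ m - 'X =
   (c%:P * \sum_(i < m) (p + c%:P * Q) ^+ (m.-1 - i) * p ^+ i + g) * Q.
  move=> c; rewrite mulrDl -Hg.
  set S := \sum_(i < m) _.
  have E : (p + c%:P * Q) ^+ m - p ^+ m = c%:P * Q * S by rewrite subrXX addrC addKr.
  rewrite -mulrA [S * Q]mulrC mulrA -E.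
  by rewrite addrA subrK.
suff [c Hc] : exists c : R,
   (c%:P * \sum_(i < m) (p + c%:P * Q) ^+ (m.-1 - i) * p ^+ i + g).[r] = 0.
  exists (p + c%:P * Q); rewrite big_cons key dvdp_mul //.
  by rewrite dvdp_XsubCl; apply/rootP.
have Hgr : (p ^+ m - 'X).[r] = g.[r] * Q.[r] by rewrite Hg hornerM.
rewrite hornerD hornerN hornerX horner_exp in Hgr.
have [Qr0|Qr0] := eqVneq Q.[r] 0.
  have pr : p.[r] ^+ m = r.
    by apply/eqP; rewrite -subr_eq0 Hgr Qr0 mulr0.
  have pr0 : p.[r] != 0.
    apply/eqP=> pr0; move: pr; rewrite pr0 expr0n.
    by rewrite eqn0Ngt m0 /= => r0'; move: r0; rewrite -r0' ltxx.
  pose d := m%:R * p.[r] ^+ m.-1.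
  have d0 : d != 0 by rewrite mulf_neq0 ?pnatr_eq0 -?lt0n ?expf_neq0.
  exists (- g.[r] / d).
  rewrite hornerD hornerM hornerC horner_sum.
  have -> : \sum_(i < m) ((p + (- g.[r] / d)%:P * Q) ^+ (m.-1 - i) * p ^+ i).[r]
          = d.
    rewrite (eq_bigr (fun _ => p.[r] ^+ m.-1)); last first.
      move=> i _; rewrite hornerM !horner_exp hornerD hornerM Qr0 mulr0 addr0.
      by rewrite -exprD subnK // -ltnS prednK.
    by rewrite sumr_const card_ord; rewrite /d mulr_natl.
  by rewrite divfK ?mulNr ?divfK // addNr.
have [s Hs] := rcf_root m0 r0.
exists ((s - p.[r]) / Q.[r]).
have : ((p + ((s - p.[r]) / Q.[r])%:P * Q) ^+ m - 'X).[r] = 0.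
  rewrite hornerD horner_exp hornerD hornerM hornerC divfK // [p.[r] + _]addrC subrK hornerN hornerX.
  by rewrite Hs subrr.
by rewrite key hornerM => /eqP; rewrite mulf_eq0 (negPf Qr0) orbF => /eqP.
Qed.

Section Om.
Variable C : numClosedFieldType.

Lemma mxconjK m n (A : 'M[C]_(m, n)) : mxconj (mxconj A) = A.
Proof. by apply/matrixP=> i j; rewrite !mxE conjCK. Qed.
Lemma mxconjD m n (A B : 'M[C]_(m, n)) : mxconj (A + B) = mxconj A + mxconj B.
Proof. by apply/matrixP=> i j; rewrite !mxE rmorphD. Qed.
Lemma mxconjN m n (A : 'M[C]_(m, n)) : mxconj (- A) = - mxconj A.
Proof. by apply/matrixP=> i j; rewrite !mxE rmorphN. Qed.
Lemma mxconj0 m n : mxconj (0 : 'M[C]_(m, n)) = 0.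
Proof. by apply/matrixP=> i j; rewrite !mxE rmorph0. Qed.
Lemma mxconjM m n p (A : 'M[C]_(m, n)) (B : 'M[C]_(n, p)) :
  mxconj (A *m B) = mxconj A *m mxconj B.
Proof. exact: map_mxM. Qed.
Lemma mxconj_scalar n (c : C) : c^* = c -> mxconj (c%:M : 'M[C]_n) = c%:M.
Proof. by move=> cr; rewrite /mxconj map_scalar_mx /= cr. Qed.

Lemma adjmxM m n p (A : 'M[C]_(m, n)) (B : 'M[C]_(n, p)) :
  adjmx (A *m B) = adjmx B *m adjmx A.
Proof. by rewrite /adjmx mxconjM trmx_mul. Qed.
Lemma adjmxD m n (A B : 'M[C]_(m, n)) : adjmx (A + B) = adjmx A + adjmx B.
Proof. by rewrite /adjmx mxconjD linearD. Qed.
Lemma adjmx0 m n : adjmx (0 : 'M[C]_(m, n)) = 0.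
Proof. by rewrite /adjmx mxconj0 trmx0. Qed.
Lemma adjmx_scalar n (c : C) : c^* = c -> adjmx (c%:M : 'M[C]_n) = c%:M.
Proof. by move=> cr; rewrite /adjmx mxconj_scalar // tr_scalar_mx. Qed.

Lemma inOmega0 n : inOmega (0 : 'M[C]_(n + n)).
Proof. by exists 0, 0; rewrite mxconj0 oppr0 block_mx0. Qed.
Lemma inOmegaD n (A B : 'M[C]_(n + n)) : inOmega A -> inOmega B -> inOmega (A + B).
Proof.
move=> [A1 [A2 ->]] [B1 [B2 ->]]; exists (A1 + B1), (A2 + B2).
by rewrite add_block_mx !mxconjD opprD.
Qed.
Lemma inOmega_scalar n (c : C) : c^* = c -> inOmega (c%:M : 'M[C]_(n + n)).
Proof.
move=> cr; exists c%:M, 0; rewrite mxconj0 oppr0 mxconj_scalar //.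
exact: scalar_mx_block.
Qed.
Lemma inOmegaM n (A B : 'M[C]_(n + n)) : inOmega A -> inOmega B -> inOmega (A *m B).
Proof.
move=> [A1 [A2 ->]] [B1 [B2 ->]].
exists (A1 *m B1 - mxconj A2 *m B2), (A2 *m B1 + mxconj A1 *m B2).
rewrite mulmx_block; congr block_mx.
- by rewrite mulmxN.
- by rewrite mxconjD !mxconjM !mxconjK addrC.
- by rewrite opprD mulNmx mulmxN.
- by rewrite mxconjD mxconjN !mxconjM !mxconjK mulNmx addrC.
Qed.
End Om.

Lemma conj_toC (R : rcfType) (c : R) : (c%:C%C : R[i])^* = c%:C%C.
Proof. by apply: conj_Creal; apply/complex_realP; exists c. Qed.

Lemma poly_omega (R : rcfType) n' (H B : 'M[R[i]]_(n'.+1 + n'.+1)) :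
  inOmega B -> H_selfadjoint H B -> forall p : {poly R},
  @inOmega _ n'.+1 (horner_mx B (map_poly (real_complex R) p)) /\
  H_selfadjoint H (horner_mx B (map_poly (real_complex R) p)).
Proof.
move=> OB HB; elim/poly_ind => [|p c [IO IH]].
  rewrite rmorph0 rmorph0; split; first exact: inOmega0.
  by rewrite /H_selfadjoint adjmx0 mulmx0 mul0mx.
set X := horner_mx B _ in IO IH.
have comm : X *m B = B *m X.
  rewrite !mulmxE -(horner_mx_X B) /X -!rmorphM /=.
  by rewrite mulrC.
rewrite rmorphD rmorphM /= map_polyX map_polyC /= rmorphD rmorphM /=.
rewrite horner_mx_X horner_mx_C -/X -mulmxE; split.
  by apply: inOmegaD; [apply: inOmegaM | apply: inOmega_scalar; rewrite conj_toC].
rewrite /H_selfadjoint adjmxD adjmx_scalar ?conj_toC // mulmxDr mulmxDl.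
congr (_ + _); last by rewrite scalar_mxC.
by rewrite mulmxA IH -mulmxA HB mulmxA -adjmxM -comm.
Qed.

Theorem mainTheorem6 (R : realType) (n m : nat) (Hm : (1 <= m)%N)
  (H B : 'M[R[i]]_(n + n)) :
  inOmega H -> H \in unitmx -> is_hermitian H ->
  inOmega B -> H_selfadjoint H B -> spec_pos B ->
  exists A : 'M[R[i]]_(n + n),
    [/\ inOmega A, H_selfadjoint H A & A ^+ m = B].
Proof.
move=> _ _ _ OB HB SB.
case: n H B OB HB SB => [|n'] H B OB HB SB.
  exists B; split => //; apply/matrixP => -[i Hi]; by [].
have [rs Hrs] := closed_field_poly_normal (char_poly B).
rewrite (monicP (char_poly_monic B)) scale1r in Hrs.
have rsP z : z \in rs -> z \is Num.real /\ 0 < z.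
  move=> zin; apply: SB; rewrite eigenvalue_root_char Hrs root_prod_XsubC //.
pose rs' := map (@complex.Re R) rs.
have pos' : all (fun r => 0 < r) rs'.
  apply/allP => r /mapP [z zin ->]; have [zr z0] := rsP z zin.
  by rewrite -(@ltcR R) RRe_real.
have [p Hp] := @core _ m rs' Hm pos'.
have Echi : char_poly B = map_poly (real_complex R) (\prod_(r <- rs') ('X - r%:P)).
  rewrite Hrs rmorph_prod big_map; apply: eq_big_seq => z zin.
  rewrite /= map_polyXsubC /= RRe_real //; by case: (rsP z zin).
have := @poly_omega _ n' H B OB HB p; set A := horner_mx B _ => -[OA HA].
exists A; split => //.
rewrite -(dvdp_map (real_complex R)) -Echi rmorphB rmorphXn /= map_polyX in Hp.
case/dvdpP: Hp => k Hk.
have : horner_mx B (map_poly (real_complex R) p ^+ m - 'X) = 0.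
  by rewrite Hk rmorphM /= Cayley_Hamilton mulr0.
rewrite rmorphB rmorphXn /= horner_mx_X => /eqP; rewrite subr_eq0 => /eqP.
by [].
Qed.
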